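(* Let $n\ge1$, $k=\lfloor n/2\rfloor$, and let $(p_j,u_j)$, $0\le j\le n$, be the coordinates of the trajectory $T_n$. Then $$C_n=2\sum_{j=0}^{k-1}\bigl(3-2p_j-p_ju_j\bigr)+p_k^2.$$
   Context: For $n\ge1$ and $\mathbf{x}=(x_1,\dots,x_n)\in(0,\infty)^n$ let $f_n(\mathbf{x})=\sum_{i=1}^n x_i+\sum_{1\le i\le j\le n}\prod_{k=i}^j \frac1{x_k}$, $A_n=\inf_{\mathbf{x}\in(0,\infty)^n} f_n(\mathbf{x})$, and $C_n=3n-A_n$. Let $\Phi$ be the partial map of $\mathbb{R}^2$ defined for $p\ne0$ by $\Phi(p,u)=\bigl(p^2(u+1)-1,\ 1/p\bigr)$. For $n\ge1$, the trajectory $T_n$ is the (existing and unique) finite sequence $(p_j,u_j)$, $j=0,\dots,n$, with $(p_j,u_j)=\Phi(p_{j-1},u_{j-1})$ for $1\le j\le n$, $u_0=0$, $p_n=0$, and $p_j>0$ for $0\le j\le n-1$. *)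

(* Defs.v *)
From Stdlib Require Import Reals.
From Coquelicot Require Import Coquelicot.
Open Scope R_scope.

Fixpoint sumR (m : nat) (g : nat -> R) : R :=
  match m with O => 0 | S m' => sumR m' g + g m' end.
Fixpoint prodR (m : nat) (g : nat -> R) : R :=
  match m with O => 1 | S m' => prodR m' g * g m' end.

(* f_n(x) = sum_{i=1}^n x_i + sum_{1<=i<=j<=n} prod_{k=i}^j 1/x_k,
   with x : nat -> R, coordinates x 1, ..., x n (other values unused).
   Outer index i' = i-1 in 0..n-1, inner d = j-i in 0..n-1-i', factor t = k-i. *)
Definition f (n : nat) (x : nat -> R) : R :=
  sumR n (fun i' => x (S i'))
  + sumR n (fun i' => sumR (n - i') (fun d =>
        prodR (S d) (fun t => / x (S i' + t)%nat))).

Definition A_n (n : nat) : R :=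
  real (Glb_Rbar (fun y => exists x : nat -> R,
          (forall i, (1 <= i <= n)%nat -> 0 < x i) /\ y = f n x)).

Definition C_n (n : nat) : R := 3 * INR n - A_n n.

(* Phi(p,u) = (p^2 (u+1) - 1, 1/p), used only for p <> 0 *)
Definition Phi (p u : R) : R * R := (p ^ 2 * (u + 1) - 1, / p).

Definition is_trajectory (n : nat) (p u : nat -> R) : Prop :=
  u 0%nat = 0 /\ p n = 0 /\
  (forall j, (j < n)%nat -> 0 < p j) /\
  (forall j, (1 <= j <= n)%nat -> (p j, u j) = Phi (p (j - 1)%nat) (u (j - 1)%nat)).

(* Main.v *)
Require Import Defs.
From Stdlib Require Import Reals Lra Lia.
From Coquelicot Require Import Coquelicot.
Open Scope R_scope.


Lemma sumR_ext m g h : (forall i, (i < m)%nat -> g i = h i) -> sumR m g = sumR m h.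
Proof. induction m; simpl; intros H; [reflexivity|]. rewrite IHm by (intros; apply H; lia). rewrite H by lia. reflexivity. Qed.

Lemma prodR_ext m g h : (forall i, (i < m)%nat -> g i = h i) -> prodR m g = prodR m h.
Proof. induction m; simpl; intros H; [reflexivity|]. rewrite IHm by (intros; apply H; lia). rewrite H by lia. reflexivity. Qed.

Lemma sumR_plus m g h : sumR m (fun i => g i + h i) = sumR m g + sumR m h.
Proof. induction m; simpl; [lra|]. rewrite IHm. lra. Qed.

Lemma sumR_minus m g h : sumR m (fun i => g i - h i) = sumR m g - sumR m h.
Proof. induction m; simpl; [lra|]. rewrite IHm. lra. Qed.

Lemma sumR_scal m k g : sumR m (fun i => k * g i) = k * sumR m g.
Proof. induction m; simpl; [lra|]. rewrite IHm. lra. Qed.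

Lemma sumR_scal_r m k g : sumR m (fun i => g i * k) = sumR m g * k.
Proof. induction m; simpl; [lra|]. rewrite IHm. lra. Qed.

Lemma sumR_const m k : sumR m (fun _ => k) = INR m * k.
Proof. induction m; simpl sumR; [simpl; lra|]. rewrite IHm, S_INR. lra. Qed.

Lemma sumR_shift m g : sumR (S m) g = g 0%nat + sumR m (fun i => g (S i)).
Proof. induction m; simpl in *; [lra|]. rewrite IHm. lra. Qed.

Lemma prodR_shift m g : prodR (S m) g = g 0%nat * prodR m (fun i => g (S i)).
Proof. induction m; simpl in *; [lra|]. rewrite IHm. lra. Qed.

Lemma sumR_le m g h : (forall i, (i < m)%nat -> g i <= h i) -> sumR m g <= sumR m h.
Proof. induction m; simpl; intros H; [lra|]. assert (g m <= h m) by (apply H; lia).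
 assert (sumR m g <= sumR m h) by (apply IHm; intros; apply H; lia). lra. Qed.

Lemma sumR_tele m g : sumR m (fun i => g (S i) - g i) = g m - g 0%nat.
Proof. induction m; simpl; [lra|]. rewrite IHm. lra. Qed.

Lemma sumR_rev m g : sumR m g = sumR m (fun i => g (m - 1 - i)%nat).
Proof. induction m; [reflexivity|]. rewrite (sumR_shift m (fun i => g (S m - 1 - i)%nat)). simpl sumR at 1. rewrite IHm.
 replace (S m - 1 - 0)%nat with m by lia.
 rewrite (sumR_ext m (fun i => g (m - 1 - i)%nat) (fun i => g (S m - 1 - S i)%nat)) by (intros; f_equal; lia).
 lra. Qed.

Lemma sumR_add a b g : sumR (a + b) g = sumR a g + sumR b (fun j => g (a + j)%nat).
Proof. induction b; simpl. rewrite Nat.add_0_r; lra. rewrite Nat.add_succ_r. simpl. rewrite IHb. lra. Qed.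

Lemma sumR_nonneg_zero m g : (forall i, (i < m)%nat -> 0 <= g i) -> sumR m g <= 0 ->
  forall i, (i < m)%nat -> g i = 0.
Proof. induction m; simpl; intros H Hs i Hi; [lia|].
 assert (0 <= sumR m g) by (
   replace 0 with (sumR m (fun _ => 0)) by (rewrite sumR_const; lra); apply sumR_le; intros; apply H; lia).
 assert (0 <= g m) by (apply H; lia).
 destruct (Nat.eq_dec i m). subst; lra. apply IHm; try lra; try lia. intros; apply H; lia. Qed.

Lemma sumR_exch n (F : nat -> nat -> R) :
  sumR n (fun i => sumR (n - i) (fun d => F i (i + d)%nat)) =
  sumR n (fun b => sumR (S b) (fun i => F i b)).
Proof. induction n; [reflexivity|].
 transitivity (sumR n (fun b => sumR (S b) (fun i => F i b)) + sumR (S n) (fun i => F i n)); [|reflexivity].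
 rewrite <- IHn.
 rewrite (sumR_ext (S n) _ (fun i => sumR (n - i) (fun d => F i (i + d)%nat) + F i n)).
 2:{ intros i Hi. replace (S n - i)%nat with (S (n - i)) by lia. simpl. f_equal. f_equal. lia. }
 rewrite sumR_plus. simpl sumR at 1. replace (n - n)%nat with 0%nat by lia. simpl. lra. Qed.

Definition P (x : nat -> R) a d := prodR (S d) (fun t => / x (a + t)%nat).
Definition G (x : nat -> R) a m := sumR m (fun d => P x a d).
Definition Rs (x : nat -> R) b := sumR (S b) (fun i => P x (S i) (b - i)).

Lemma f_eq (n : nat) (x : nat -> R) : Defs.f n x = sumR n (fun i => x (S i)) + sumR n (fun i => G x (S i) (n - i)).
Proof. reflexivity. Qed.

Lemma P_shift x a d : P x a (S d) = / x a * P x (S a) d.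
Proof. unfold P. rewrite prodR_shift. rewrite Nat.add_0_r. f_equal.
 apply prodR_ext. intros; f_equal; f_equal; lia. Qed.

Lemma P_last x a d : P x a (S d) = P x a d * / x (a + S d)%nat.
Proof. reflexivity. Qed.

Lemma P0 x a : P x a 0 = / x a.
Proof. unfold P; simpl. rewrite Nat.add_0_r. lra. Qed.

Lemma G_rec x a m : G x a (S m) = (1 + G x (S a) m) * / x a.
Proof. unfold G. rewrite sumR_shift. rewrite P0.
 rewrite (sumR_ext m _ (fun d => / x a * P x (S a) d)) by (intros; apply P_shift).
 rewrite sumR_scal. change (sumR m (fun d => P x (S a) d)) with (sumR m (P x (S a))). ring. Qed.

Lemma Rs0 x : Rs x 0 = / x 1%nat.
Proof. unfold Rs. simpl sumR. replace (0-0)%nat with 0%nat by lia. rewrite P0. ring. Qed.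

Lemma Rs_rec x b : Rs x (S b) = (1 + Rs x b) * / x (S (S b)).
Proof. unfold Rs. change (sumR (S (S b)) (fun i => P x (S i) (S b - i))) with
  (sumR (S b) (fun i => P x (S i) (S b - i)) + P x (S (S b)) (S b - S b)).
 rewrite (sumR_ext (S b) _ (fun i => P x (S i) (b - i) * / x (S (S b)))).
 2:{ intros i Hi. replace (S b - i)%nat with (S (b - i)) by lia. rewrite P_last. f_equal. f_equal. f_equal. lia. }
 rewrite sumR_scal_r. replace (S b - S b)%nat with 0%nat by lia. rewrite P0. ring. Qed.

Lemma P_pos x a d : (forall t, (t <= d)%nat -> 0 < x (a + t)%nat) -> 0 < P x a d.
Proof. intros H. unfold P. induction d; simpl.
 - assert (0 < x (a+0)%nat) by (apply H; lia). apply Rinv_0_lt_compat in H0. lra.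
 - assert (0 < x (a+ S d)%nat) by (apply H; lia). apply Rinv_0_lt_compat in H0.
   assert (0 < prodR (S d) (fun t => / x (a + t)%nat)) by (apply IHd; intros; apply H; lia).
   simpl in H1. apply Rmult_lt_0_compat; lra. Qed.

Lemma G_ext x y a m : (forall t, (t < m)%nat -> x (a + t)%nat = y (a + t)%nat) -> G x a m = G y a m.
Proof. intros H. unfold G. apply sumR_ext. intros d Hd. unfold P. apply prodR_ext.
 intros t Ht. rewrite H by lia. reflexivity. Qed.

Lemma exch_P x n W : sumR n (fun i => sumR (n - i) (fun d => P x (S i) d * W (S i + d)%nat)) =
   sumR n (fun b => Rs x b * W (S b)).
Proof.
 transitivity (sumR n (fun i => sumR (n - i) (fun d => (fun i b => P x (S i) (b - i) * W (S b)) i (i + d)%nat))).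
 { apply sumR_ext. intros i Hi. apply sumR_ext. intros d Hd. simpl. f_equal. f_equal. lia. }
 rewrite (sumR_exch n (fun i b => P x (S i) (b - i) * W (S b))). apply sumR_ext. intros b Hb. unfold Rs. rewrite sumR_scal_r. reflexivity. Qed.

Lemma exch_G x n : sumR n (fun i => G x (S i) (n - i)) = sumR n (fun b => Rs x b).
Proof. transitivity (sumR n (fun b => Rs x b * (fun _ => 1) (S b))).
 2:{ apply sumR_ext; intros; simpl; ring. }
 rewrite <- (exch_P x n (fun _ => 1)). apply sumR_ext. intros. unfold G. apply sumR_ext. intros. simpl; ring. Qed.

Definition cc (p u : nat -> R) i := u i * (1 + p i).

Lemma tr_p_pos n p u : is_trajectory n p u -> forall j, (j < n)%nat -> 0 < p j.
Proof. intros (_&_&H&_); auto. Qed.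

Lemma tr_dyn n p u : is_trajectory n p u -> forall j, (j < n)%nat ->
  p (S j) = p j ^ 2 * (u j + 1) - 1 /\ u (S j) = / p j.
Proof. intros (_&_&_&H) j Hj. specialize (H (S j) ltac:(lia)). unfold Phi in H.
 replace (S j - 1)%nat with j in H by lia. injection H; auto. Qed.

Lemma tr_u_pos n p u : is_trajectory n p u -> forall j, (1 <= j <= n)%nat -> 0 < u j.
Proof. intros H j Hj. destruct j; [lia|]. rewrite (proj2 (tr_dyn n p u H j ltac:(lia))).
 apply Rinv_0_lt_compat. apply (tr_p_pos n p u H). lia. Qed.

Lemma tr_u_nn n p u : is_trajectory n p u -> forall j, (j <= n)%nat -> 0 <= u j.
Proof. intros H j Hj. destruct j. destruct H as (->&_). lra.
 left; apply (tr_u_pos n p u H); lia. Qed.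

Lemma tr_p_nn n p u : is_trajectory n p u -> forall j, (j <= n)%nat -> 0 <= p j.
Proof. intros H j Hj. destruct (Nat.eq_dec j n). subst. destruct H as (_&->&_). lra.
 left; apply (tr_p_pos n p u H); lia. Qed.

Lemma cc_pos n p u : is_trajectory n p u -> forall i, (1 <= i <= n)%nat -> 0 < cc p u i.
Proof. intros H i Hi. unfold cc. assert (0 < u i) by (apply (tr_u_pos n p u H); lia).
 assert (0 <= p i) by (apply (tr_p_nn n p u H); lia). apply Rmult_lt_0_compat; lra. Qed.

Lemma cc_succ n p u : is_trajectory n p u -> forall i, (i < n)%nat -> cc p u (S i) = p i * (1 + u i).
Proof. intros H i Hi. unfold cc. destruct (tr_dyn n p u H i Hi) as [E1 E2].
 assert (0 < p i) by (apply (tr_p_pos n p u H); lia). rewrite E1, E2. field. lra. Qed.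

Lemma cc_T n p u : is_trajectory n p u -> forall i, (i < n)%nat -> G (cc p u) (S i) (n - i) = p i.
Proof. intros H.
 assert (K : forall m, (m <= n)%nat -> G (cc p u) (S (n - m)) m = p (n - m)%nat).
 { induction m; intros Hm.
   - unfold G; simpl. replace (n-0)%nat with n by lia. destruct H as (_&->&_). reflexivity.
   - rewrite G_rec. replace (S (S (n - S m))) with (S (n - m)) by lia. rewrite IHm by lia.
     replace (n - m)%nat with (S (n - S m)) by lia.
     rewrite (cc_succ n p u H) by lia.
     destruct (tr_dyn n p u H (n - S m) ltac:(lia)) as [E1 _]. rewrite E1.
     assert (0 < p (n - S m)%nat) by (apply (tr_p_pos n p u H); lia).
     assert (0 <= u (n - S m)%nat) by (apply (tr_u_nn n p u H); lia).
     field. split; lra. }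
 intros i Hi. specialize (K (n - i)%nat ltac:(lia)). replace (n - (n - i))%nat with i in K by lia. exact K. Qed.

Lemma cc_R n p u : is_trajectory n p u -> forall b, (b < n)%nat -> Rs (cc p u) b = u (S b).
Proof. intros H. induction b; intros Hb.
 - rewrite Rs0. rewrite (cc_succ n p u H) by lia. pose proof H as H'. destruct H' as (E&_). rewrite E.
   rewrite (proj2 (tr_dyn n p u H 0 Hb)). 
   replace (1 + 0) with 1 by lra. rewrite Rmult_1_r. reflexivity.
 - rewrite Rs_rec. rewrite IHb by lia. rewrite (cc_succ n p u H) by lia.
   rewrite (proj2 (tr_dyn n p u H (S b) Hb)).
   assert (0 < p (S b)) by (apply (tr_p_pos n p u H); lia).
   assert (0 <= u (S b)) by (apply (tr_u_nn n p u H); lia).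
   field. split; lra. Qed.

Definition Zf (x c : nat -> R) j := sumR j (fun i => ln (x (S i) / c (S i))).

Lemma x_exp n (x c : nat -> R) : (forall i, (1 <= i <= n)%nat -> 0 < x i) ->
  (forall i, (1 <= i <= n)%nat -> 0 < c i) ->
  forall i, (i < n)%nat -> x (S i) = c (S i) * exp (Zf x c (S i) - Zf x c i).
Proof. intros Hx Hc i Hi. unfold Zf. simpl sumR.
 replace (sumR i (fun i0 => ln (x (S i0) / c (S i0))) + ln (x (S i) / c (S i)) -
   sumR i (fun i0 => ln (x (S i0) / c (S i0)))) with (ln (x (S i) / c (S i))) by ring.
 assert (0 < x (S i)) by (apply Hx; lia). assert (0 < c (S i)) by (apply Hc; lia).
 rewrite exp_ln. field. lra. apply Rdiv_lt_0_compat; lra. Qed.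

Lemma P_exp n (x c : nat -> R) : (forall i, (1 <= i <= n)%nat -> 0 < x i) ->
  (forall i, (1 <= i <= n)%nat -> 0 < c i) ->
  forall i d, (i + d < n)%nat -> P x (S i) d = P c (S i) d * exp (Zf x c i - Zf x c (S i + d)).
Proof. intros Hx Hc i d. induction d; intros Hd.
 - rewrite !P0. rewrite Nat.add_0_r. rewrite (x_exp n x c Hx Hc i) by lia.
   assert (0 < c (S i)) by (apply Hc; lia).
   replace (Zf x c i - Zf x c (S i)) with (- (Zf x c (S i) - Zf x c i)) by ring.
   rewrite exp_Ropp. rewrite Rinv_mult. reflexivity.
 - rewrite !P_last. rewrite IHd by lia.
   replace (S i + S d)%nat with (S (i + S d)) by lia.
   rewrite (x_exp n x c Hx Hc (i + S d)) by lia.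
   replace (S i + d)%nat with (i + S d)%nat by lia.
   replace (Zf x c i - Zf x c (S (i + S d))) with
     ((Zf x c i - Zf x c (i + S d)) + - (Zf x c (S (i + S d)) - Zf x c (i + S d))) by ring.
   rewrite exp_plus, exp_Ropp. rewrite Rinv_mult. ring. Qed.

Lemma cert n p u (x : nat -> R) : is_trajectory n p u ->
  (forall i, (1 <= i <= n)%nat -> 0 < x i) ->
  Defs.f n x - Defs.f n (cc p u) >=
  sumR n (fun i => cc p u (S i) * (exp (Zf x (cc p u) (S i) - Zf x (cc p u) i) - 1
                                    - (Zf x (cc p u) (S i) - Zf x (cc p u) i))).
Proof. intros H Hx. set (c := cc p u). set (Z := Zf x c).
 assert (Hc : forall i, (1 <= i <= n)%nat -> 0 < c i) by (apply (cc_pos n p u H)).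
 rewrite !f_eq.
 assert (L : sumR n (fun i => G x (S i) (n - i)) >=
    sumR n (fun i => G c (S i) (n - i)) + sumR n (fun i => Z i * G c (S i) (n - i))
    - sumR n (fun b => Rs c b * Z (S b))).
 { rewrite <- exch_P. rewrite <- !sumR_plus. rewrite <- sumR_minus. apply Rle_ge. apply sumR_le.
   intros i Hi. unfold G. rewrite <- sumR_scal. rewrite <- !sumR_plus. rewrite <- sumR_minus.
   apply sumR_le. intros d Hd. rewrite (P_exp n x c Hx Hc) by lia.
   assert (0 < P c (S i) d) by (apply P_pos; intros; apply Hc; lia).
   pose proof (exp_ineq1_le (Z i - Z (S i + d)%nat)).
   fold Z. apply Rmult_le_compat_l with (r := P c (S i) d) in H1; [|lra]. nra. }
 rewrite (sumR_ext n (fun i => G c (S i) (n - i)) p) in L by (intros; apply (cc_T n p u H); lia).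
 rewrite (sumR_ext n (fun i => Z i * G c (S i) (n - i)) (fun i => Z i * p i)) in L
   by (intros; rewrite (cc_T n p u H); [reflexivity|lia]).
 rewrite (sumR_ext n (fun b => Rs c b * Z (S b)) (fun b => u (S b) * Z (S b))) in L
   by (intros; rewrite (cc_R n p u H); [reflexivity|lia]).
 rewrite (sumR_ext n (fun i => G c (S i) (n - i)) p) by (intros; apply (cc_T n p u H); lia).
 rewrite (sumR_ext n (fun i => x (S i)) (fun i => c (S i) * exp (Z (S i) - Z i)))
   by (intros; apply (x_exp n x c Hx Hc); lia).
 assert (T : sumR n (fun i => Z (S i) * (p (S i) * u (S i)) - Z i * (p i * u i)) = 0).
 { rewrite (sumR_tele n (fun i => Z i * (p i * u i))). destruct H as (E0&En&_).
   rewrite En. unfold Z, Zf. simpl. ring. }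
 assert (E : sumR n (fun i => Z i * p i) - sumR n (fun b => u (S b) * Z (S b)) =
   - sumR n (fun i => c (S i) * (Z (S i) - Z i))).
 { enough (sumR n (fun i => Z i * p i) - sumR n (fun b => u (S b) * Z (S b)) +
      sumR n (fun i => c (S i) * (Z (S i) - Z i)) = 
      sumR n (fun i => Z (S i) * (p (S i) * u (S i)) - Z i * (p i * u i))) by lra.
   rewrite <- !sumR_minus. rewrite <- sumR_plus.
   apply sumR_ext. intros i Hi. pose proof (cc_succ n p u H i Hi) as E1. fold c in E1.
   replace (c (S i) * (Z (S i) - Z i)) with (c (S i) * Z (S i) - c (S i) * Z i) by ring.
   rewrite E1 at 2. unfold c at 1, cc. ring. }
 assert (sumR n (fun i => cc p u (S i) * (exp (Z (S i) - Z i) - 1 - (Z (S i) - Z i))) =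
   sumR n (fun i => c (S i) * exp (Z (S i) - Z i)) + (sumR n p + sumR n (fun i => Z i * p i) -
    sumR n (fun b => u (S b) * Z (S b))) - (sumR n (fun i => c (S i)) + sumR n p)).
 { assert (sumR n (fun i => c (S i) * (exp (Z (S i) - Z i) - 1 - (Z (S i) - Z i))) =
      sumR n (fun i => c (S i) * exp (Z (S i) - Z i)) - sumR n (fun i => c (S i)) 
      - sumR n (fun i => c (S i) * (Z (S i) - Z i))).
   { rewrite <- !sumR_minus. apply sumR_ext. intros; ring. }
   fold c. lra. }
 fold c in H0 |- *. lra. Qed.

Lemma phi_nn w : 0 <= exp w - 1 - w.
Proof. pose proof (exp_ineq1_le w). lra. Qed.

Lemma phi_zero w : exp w - 1 - w = 0 -> w = 0.
Proof. intros H. destruct (Req_dec w 0) as [|Hw]; auto. exfalso.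
 destruct (Rlt_or_le (1 + w/2) 0).
 - assert (0 < exp w) by apply exp_pos. lra.
 - assert (exp w = exp (w/2) * exp (w/2)) by (rewrite <- exp_plus; f_equal; field).
   pose proof (exp_ineq1_le (w/2)).
   assert ((1 + w/2) * (1 + w/2) <= exp (w/2) * exp (w/2)) by (apply Rmult_le_compat; lra).
   assert (0 < w * w) by (apply Rsqr_pos_lt in Hw; unfold Rsqr in Hw; lra). nra. Qed.

Lemma fmin n p u x : is_trajectory n p u -> (forall i, (1 <= i <= n)%nat -> 0 < x i) ->
  Defs.f n (cc p u) <= Defs.f n x.
Proof. intros H Hx. pose proof (cert n p u x H Hx).
 assert (0 <= sumR n (fun i => cc p u (S i) * (exp (Zf x (cc p u) (S i) - Zf x (cc p u) i) - 1
                                    - (Zf x (cc p u) (S i) - Zf x (cc p u) i)))).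
 { replace 0 with (sumR n (fun _ => 0)) by (rewrite sumR_const; ring). apply sumR_le.
   intros i Hi. apply Rmult_le_pos. left; apply (cc_pos n p u H); lia. apply phi_nn. }
 lra. Qed.

Definition crev n (c : nat -> R) i := c (S n - i)%nat.

Lemma Grev n (c : nat -> R) : forall i, (i < n)%nat -> G (crev n c) (S i) (n - i) = Rs c (n - 1 - i).
Proof.
 assert (K : forall k, (S k <= n)%nat -> G (crev n c) (n - k) (S k) = Rs c k).
 { induction k; intros Hk.
   - rewrite G_rec. unfold G at 1; simpl sumR. rewrite Rs0. unfold crev.
     replace (S n - (n - 0))%nat with 1%nat by lia. ring.
   - rewrite G_rec. replace (S (n - S k)) with (n - k)%nat by lia. rewrite IHk by lia.
     rewrite Rs_rec. unfold crev. replace (S n - (n - S k))%nat with (S (S k)) by lia. reflexivity. }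
 intros i Hi. specialize (K (n - 1 - i)%nat ltac:(lia)).
 replace (n - (n - 1 - i))%nat with (S i) in K by lia.
 replace (S (n - 1 - i)) with (n - i)%nat in K by lia. exact K. Qed.

Lemma f_rev n p u : is_trajectory n p u -> Defs.f n (crev n (cc p u)) = Defs.f n (cc p u).
Proof. intros H. rewrite !f_eq. f_equal.
 - rewrite (sumR_rev n (fun i => cc p u (S i))). apply sumR_ext. intros i Hi. unfold crev. f_equal. lia.
 - rewrite (sumR_ext n _ (fun i => Rs (cc p u) (n - 1 - i))) by (intros; apply Grev; lia).
   rewrite <- (sumR_rev n (fun i => Rs (cc p u) i)). symmetry. apply exch_G. Qed.

Lemma csym n p u : is_trajectory n p u -> forall i, (i < n)%nat -> cc p u (n - i)%nat = cc p u (S i).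
Proof. intros H.
 set (c := cc p u). set (x := crev n c).
 assert (Hx : forall i, (1 <= i <= n)%nat -> 0 < x i).
 { intros i Hi. unfold x, crev. apply (cc_pos n p u H). lia. }
 pose proof (cert n p u x H Hx) as C. assert (Ef : Defs.f n x = Defs.f n c) by (apply f_rev; auto). fold c in C. rewrite Ef in C.
 assert (Z : forall i, (i < n)%nat -> c (S i) * (exp (Zf x c (S i) - Zf x c i) - 1 - (Zf x c (S i) - Zf x c i)) = 0).
 { apply sumR_nonneg_zero; [|lra]. intros i Hi. apply Rmult_le_pos. left; apply (cc_pos n p u H); lia. apply phi_nn. }
 intros i Hi. specialize (Z i Hi). 
 assert (0 < c (S i)) by (apply (cc_pos n p u H); lia).
 apply Rmult_integral in Z. destruct Z as [Z|Z]; [lra|]. apply phi_zero in Z.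
 transitivity (x (S i)). { unfold x, crev. reflexivity. }
 rewrite (x_exp n x c Hx (cc_pos n p u H) i Hi). rewrite Z, exp_0. ring. Qed.

Lemma usym n p u : is_trajectory n p u -> forall i, (i < n)%nat -> u (n - i)%nat = p i.
Proof. intros H i Hi. rewrite <- (cc_T n p u H i Hi).
 rewrite <- (G_ext (crev n (cc p u))).
 2:{ intros t Ht. unfold crev. replace (S n - (S i + t))%nat with (n - (i + t))%nat by lia.
     rewrite (csym n p u H) by lia. f_equal. }
 rewrite Grev by lia. rewrite (cc_R n p u H) by lia. f_equal. lia. Qed.

Lemma A_val n p u : is_trajectory n p u -> A_n n = Defs.f n (cc p u).
Proof. intros H. unfold A_n. rewrite (is_glb_Rbar_unique _ (Finite (Defs.f n (cc p u)))). reflexivity.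
 split.
 - intros y (x & Hx & ->). simpl. apply (fmin n p u x H Hx).
 - intros b Hb. apply Hb. exists (cc p u). split; auto. intros i Hi; apply (cc_pos n p u H); auto. Qed.

Definition tau (p u : nat -> R) j := 2 * p j + p j * u j.
Definition sig (p u : nat -> R) j := 2 * u (S j) + p (S j) * u (S j).

Lemma fc_val n p u : is_trajectory n p u -> Defs.f n (cc p u) = sumR n (tau p u).
Proof. intros H. rewrite f_eq. rewrite (sumR_ext n (fun i => G (cc p u) (S i) (n - i)) p)
  by (intros; apply (cc_T n p u H); lia). rewrite <- sumR_plus. apply sumR_ext. intros i Hi.
 rewrite (cc_succ n p u H) by lia. unfold tau. ring. Qed.

Lemma sig_tau n p u : is_trajectory n p u -> forall m, (m <= n)%nat ->
  sumR m (sig p u) = sumR m (tau p u) - p m * u m.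
Proof. intros H m Hm.
 assert (sumR m (fun j => sig p u j - tau p u j) =
   sumR m (fun j => (fun j => p j * u j + 2 * u j - 2 * cc p u j) (S j) - (fun j => p j * u j + 2 * u j - 2 * cc p u j) j)).
 { apply sumR_ext. intros j Hj. rewrite (cc_succ n p u H) by lia. unfold sig, tau, cc. ring. }
 rewrite sumR_tele, sumR_minus in H0. unfold cc in H0. destruct H as (E0&_). rewrite E0 in H0. lra. Qed.

Theorem lemma8 (n : nat) (p u : nat -> R) :
  (1 <= n)%nat -> is_trajectory n p u ->
  C_n n = 2 * sumR (n / 2)%nat (fun j => 3 - 2 * p j - p j * u j) + (p (n / 2)%nat) ^ 2.
Proof. intros Hn H. unfold C_n. rewrite (A_val n p u H), (fc_val n p u H).
 set (k := (n / 2)%nat).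
 assert (Hk : (n = 2 * k \/ n = 2 * k + 1)%nat).
 { pose proof (Nat.div_mod n 2 ltac:(lia)). pose proof (Nat.mod_upper_bound n 2 ltac:(lia)). unfold k. lia. }
 rewrite (sumR_ext k (fun j => 3 - 2 * p j - p j * u j) (fun j => 3 - tau p u j)) by (intros; unfold tau; ring).
 rewrite sumR_minus, sumR_const.
 assert (Split : sumR n (tau p u) = sumR k (tau p u) + sumR (n - k) (sig p u)).
 { replace n with (k + (n - k))%nat at 1 by lia. rewrite sumR_add. f_equal.
   rewrite sumR_rev. apply sumR_ext. intros j Hj.
   replace (k + (n - k - 1 - j))%nat with (n - 1 - j)%nat by lia. unfold tau, sig.
   assert (E1 : p (n - 1 - j)%nat = u (S j)).
   { rewrite <- (usym n p u H (n - 1 - j)) by lia. f_equal. lia. }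
   assert (E2 : u (n - 1 - j)%nat = p (S j)).
   { destruct (Nat.eq_dec (S j) n).
     - replace (n - 1 - j)%nat with 0%nat by lia. rewrite e. destruct H as (E0&En&_). rewrite E0, En. reflexivity.
     - replace (n - 1 - j)%nat with (n - S j)%nat by lia. apply (usym n p u H). lia. }
   rewrite E1, E2. ring. }
 rewrite Split. destruct Hk as [Hk|Hk].
 - replace (n - k)%nat with k by lia. rewrite (sig_tau n p u H k) by lia.
   assert (Euk : u k = p k). { replace k with (n - k)%nat at 1 by lia. apply (usym n p u H). lia. }
   rewrite Euk. rewrite Hk. rewrite mult_INR. simpl INR. ring.
 - replace (n - k)%nat with (S k) by lia. rewrite (sig_tau n p u H (S k)) by lia.
   assert (Euk : u (S k) = p k). { replace (S k) with (n - k)%nat by lia. apply (usym n p u H). lia. }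
   destruct (tr_dyn n p u H k ltac:(lia)) as [D1 D2].
   assert (0 < p k) by (apply (tr_p_pos n p u H); lia).
   assert (Pk : p k = 1).
   { rewrite Euk in D2. assert (p k * p k = 1) by (rewrite D2 at 1; field; lra). nra. }
   rewrite D1, D2, Pk. simpl sumR. rewrite Hk, plus_INR, mult_INR. simpl INR. unfold tau. rewrite Pk. field. Qed.
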